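(* With $V=V(z,1)$, $u_1=u_1(z)=1/(1-V(z,1))$ and \[ Q(z)=\frac{V(z,1)^2}{u_1(z)-1}-\frac{u_1(z)B(z,1,1)}{u_1(z)-1}+z\,u_1(z), \] the partial derivatives of $B$ satisfy \[ B_x(z,1,1)=\frac{u_1(z)-1}{u_1(z)}\,Q(z)\big(1-Q(z)\big),\qquad B_z(z,1,1)=\frac{u_1(z)-1}{z\,u_1(z)}\,Q(z)\big(1-Q(z)\big)+u_1(z)-1 . \]
   Context: $B(z,x,u)$ is the generating function of rooted 2-connected planar maps (no cut vertex; loops and multiple edges allowed) excluding the single-edge and single-loop maps, with $z$ marking edges, $x$ non-root faces and $u$ the root face valency; explicitly \[ B=-\tfrac12\big(1-(1+U-V+UV-2U^2V)u+U(1-V)^2u^2\big)+\tfrac12\big(1-(1-V)u\big)\sqrt{1-2U(1+V-2UV)u+U^2(1-V)^2u^2}, \] where $U=U(z,x)$, $V=V(z,x)$ are the power series determined by $z=U(1-V)^2$, $xz=V(1-U)^2$. $B_x,B_z$ are partial derivatives. *)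

(* Defs.v *)
From Stdlib Require Import Reals.
From Coquelicot Require Import Coquelicot.
Open Scope R_scope.

(* The square root is the real
   nonnegative square root (the radicand has constant term 1). *)
Definition Bf (U V : R -> R -> R) (z x u : R) : R :=
  let a := U z x in let b := V z x in
  - / 2 * (1 - (1 + a - b + a * b - 2 * a ^ 2 * b) * u + a * (1 - b) ^ 2 * u ^ 2)
  + / 2 * (1 - (1 - b) * u)
      * sqrt (1 - 2 * a * (1 + b - 2 * a * b) * u + a ^ 2 * (1 - b) ^ 2 * u ^ 2).

Definition u1 (V : R -> R -> R) (z : R) : R := / (1 - V z 1).

Definition Qf (U V : R -> R -> R) (z : R) : R :=
  (V z 1) ^ 2 / (u1 V z - 1) - u1 V z * Bf U V z 1 1 / (u1 V z - 1) + z * u1 V z.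

(* U, V are "the power series determined by z = U(1-V)^2, xz = V(1-U)^2":
   on a neighbourhood |z| < d, |x - 1| < d they solve the system, are jointly
   continuous and vanish at z = 0 (this singles out the power-series branch). *)
Definition UV_system (U V : R -> R -> R) (d : R) : Prop :=
  0 < d /\
  forall z x, Rabs z < d -> Rabs (x - 1) < d ->
    z = U z x * (1 - V z x) ^ 2 /\
    x * z = V z x * (1 - U z x) ^ 2 /\
    U 0 x = 0 /\ V 0 x = 0 /\
    continuous (fun p : R * R => U (fst p) (snd p)) (z, x) /\
    continuous (fun p : R * R => V (fst p) (snd p)) (z, x).

(* Main.v *)
Require Import Defs.
From Stdlib Require Import Reals Lra Psatz.
From Coquelicot Require Import Coquelicot.
Open Scope R_scope.

Lemma ballR (x e y : R) : ball x e y <-> Rabs (y - x) < e.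
Proof. unfold ball; simpl; unfold AbsRing_ball, abs, minus, plus, opp; simpl. tauto. Qed.

Lemma loc_R x (P : R -> Prop) : locally x P -> exists del, 0 < del /\ forall y, Rabs (y - x) < del -> P y.
Proof. intros [e He]. exists e. split. apply cond_pos. intros y Hy. apply He. apply ballR. exact Hy. Qed.

Lemma R_loc x del (P : R -> Prop) : 0 < del -> (forall y, Rabs (y - x) < del -> P y) -> locally x P.
Proof. intros H H0. exists (mkposreal del H). intros y Hy. apply H0, ballR, Hy. Qed.

Lemma carath (f g : R -> R) (x : R) :
  locally x (fun y => f y - f x = (y - x) * g y) -> continuous g x -> is_derive f x (g x).
Proof.
  intros Hl Hc. split. apply is_linear_scal_l.
  intros y Hy. apply (@is_filter_lim_locally_unique R_AbsRing R_NormedModule) in Hy. subst y.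
  intros eps. apply filterlim_locally with (eps := eps) in Hc.
  generalize (filter_and _ _ Hl Hc). apply filter_imp.
  intros y [H1 H2].
  unfold norm, minus, plus, opp, scal; simpl. unfold abs, mult; simpl.
  unfold mult, plus, opp; simpl.
  replace (f y + - f x + - ((y + - x) * g x)) with ((y - x) * (g y - g x)).
  2:{ replace (f y + - f x) with (f y - f x) by ring. rewrite H1. ring. }
  rewrite Rabs_mult. replace (y + - x) with (y - x) by ring.
  rewrite Rmult_comm. apply Rmult_le_compat_r. apply Rabs_pos. apply Rlt_le, ballR, H2.
Qed.

Lemma cmult (f g : R -> R) x : continuous f x -> continuous g x -> continuous (fun y => f y * g y) x.
Proof. intros; exact (continuous_mult f g x H H0). Qed.
Lemma cplus (f g : R -> R) x : continuous f x -> continuous g x -> continuous (fun y => f y + g y) x.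
Proof. intros; exact (continuous_plus f g x H H0). Qed.
Lemma copp (f : R -> R) x : continuous f x -> continuous (fun y => - f y) x.
Proof. intros; exact (continuous_opp f x H). Qed.
Lemma cminus (f g : R -> R) x : continuous f x -> continuous g x -> continuous (fun y => f y - g y) x.
Proof. intros. apply cplus; auto. apply copp; auto. Qed.
Lemma cconst (c x : R) : continuous (fun _ : R => c) x.
Proof. exact (continuous_const c x). Qed.
Lemma cpow (f : R -> R) x n : continuous f x -> continuous (fun y => f y ^ n) x.
Proof. intros H. induction n; simpl. apply cconst. apply cmult; auto. Qed.
Lemma cinv (f : R -> R) x : continuous f x -> f x <> 0 -> continuous (fun y => / f y) x.
Proof. intros; exact (continuous_Rinv_comp f x H H0). Qed.

Ltac cont := repeat match goal with
  | |- continuous (fun _ => ?c) _ => apply cconst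
  | |- continuous (fun y => @?f y * @?g y) _ => apply (cmult f g)
  | |- continuous (fun y => @?f y - @?g y) _ => apply (cminus f g)
  | |- continuous (fun y => @?f y + @?g y) _ => apply (cplus f g)
  | |- continuous (fun y => - @?f y) _ => apply (copp f)
  | |- continuous (fun y => @?f y ^ ?n) _ => apply (cpow f _ n)
  | H : continuous _ _ |- _ => exact H
  end.

Lemma diag_eq a b : Rabs a < 1/10 -> Rabs b < 1/10 -> a * (1 - b)^2 = b * (1 - a)^2 -> a = b.
Proof.
  intros Ha Hb H. apply Rabs_def2 in Ha; apply Rabs_def2 in Hb.
  assert (E : (a - b) * (1 - a * b) = 0) by (apply Rminus_diag_eq in H; rewrite <- H; ring).
  apply Rmult_integral in E. destruct E; [lra|]. nra.
Qed.

Lemma P_pos a b : Rabs a < 1/10 -> Rabs b < 1/10 -> 0 < 1 - 2 * (a + b) + (a^2 + a*b + b^2).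
Proof. intros Ha Hb. apply Rabs_def2 in Ha; apply Rabs_def2 in Hb. nra. Qed.

Lemma D_pos u v w : Rabs u < 1/5 -> Rabs v < 1/5 -> Rabs w < 1/5 ->
  0 < (1 - v)^2 * (1 - u)^2 - w^2 * (2 - v - w) * (2 - u - w).
Proof.
  intros Hu Hv Hw. apply Rabs_def2 in Hu; apply Rabs_def2 in Hv; apply Rabs_def2 in Hw.
  assert (p1 : 16/25 <= (1 - v) * (1 - u)) by nra.
  assert (q0 : 0 <= (2 - v - w) * (2 - u - w)) by nra.
  assert (q1 : (2 - v - w) * (2 - u - w) <= 144/25) by nra.
  assert (w2 : w^2 <= 1/25) by nra.
  assert (w0 : 0 <= w^2) by nra.
  assert (0 <= w^2 * ((2 - v - w) * (2 - u - w)) <= 144/625) by (split; nra).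
  nra.
Qed.

Lemma sq a e : e = (1 - a - a^2)^2 -> Rabs a < 1/10 -> sqrt e = 1 - a - a^2.
Proof. intros -> Ha. apply Rabs_def2 in Ha. apply sqrt_pow2. nra. Qed.

Lemma Bf_diag U V z : U z 1 = V z 1 -> Rabs (U z 1) < 1/10 -> Bf U V z 1 1 = U z 1 ^ 2 - 2 * U z 1 ^ 3.
Proof.
  intros E Ha. unfold Bf; cbv zeta. rewrite <- E. set (a := U z 1) in *.
  rewrite (sq a). field. ring. exact Ha.
Qed.

Definition Dt (U V : R -> R -> R) (z w t : R) : R :=
  (1 - V z t)^2 * (1 - U z t)^2 - w^2 * (2 - V z t - w) * (2 - U z t - w).
Definition gUf (U V : R -> R -> R) (z w t : R) : R := z * w * (2 - V z t - w) * / Dt U V z w t.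
Definition gVf (U V : R -> R -> R) (z w t : R) : R := z * (1 - V z t)^2 * / Dt U V z w t.
Definition Pf (a b : R) : R := 1 - 2 * (a + b) + (a^2 + a*b + b^2).

Theorem lemma4p2 (U V : R -> R -> R) (d : R) :
  UV_system U V d ->
  exists eps : R, 0 < eps /\
    forall z : R, 0 < Rabs z < eps ->
      is_derive (fun x => Bf U V z x 1) 1
        ((u1 V z - 1) / u1 V z * Qf U V z * (1 - Qf U V z)) /\
      is_derive (fun w => Bf U V w 1 1) z
        ((u1 V z - 1) / (z * u1 V z) * Qf U V z * (1 - Qf U V z) + u1 V z - 1).
Proof.
  intros [Hd HS].
  assert (cU : forall z x, Rabs z < d -> Rabs (x-1) < d ->
    continuous (fun y => U y x) z /\ continuous (fun t => U z t) x).
  { intros z x Hz Hx. destruct (HS z x Hz Hx) as (_&_&_&_&Hc&_). split.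
    exact (continuous_comp_2 (fun y => y) (fun _ => x) U z (continuous_id z) (continuous_const x z) Hc).
    exact (continuous_comp_2 (fun _ => z) (fun t => t) U x (continuous_const z x) (continuous_id x) Hc). }
  assert (cV : forall z x, Rabs z < d -> Rabs (x-1) < d ->
    continuous (fun y => V y x) z /\ continuous (fun t => V z t) x).
  { intros z x Hz Hx. destruct (HS z x Hz Hx) as (_&_&_&_&_&Hc). split.
    exact (continuous_comp_2 (fun y => y) (fun _ => x) V z (continuous_id z) (continuous_const x z) Hc).
    exact (continuous_comp_2 (fun _ => z) (fun t => t) V x (continuous_const z x) (continuous_id x) Hc). }
  assert (h0 : Rabs 0 < d) by (rewrite Rabs_R0; lra).
  assert (h1 : Rabs (1 - 1) < d) by (replace (1-1) with 0 by ring; rewrite Rabs_R0; lra).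
  destruct (HS 0 1 h0 h1) as (_&_&HU0&HV0&_&_).
  assert (he : 0 < 1/10) by lra.
  pose proof (proj1 (filterlim_locally _ _) (proj1 (cU 0 1 h0 h1)) (mkposreal _ he)) as LU.
  pose proof (proj1 (filterlim_locally _ _) (proj1 (cV 0 1 h0 h1)) (mkposreal _ he)) as LV.
  apply loc_R in LU. destruct LU as [d1 [Hd1 LU]].
  apply loc_R in LV. destruct LV as [d2 [Hd2 LV]].
  set (eps := Rmin d (Rmin d1 d2)).
  assert (Heps : 0 < eps) by (unfold eps; repeat apply Rmin_glb_lt; lra).
  exists eps. split; [exact Heps|].
  assert (Hsm : forall z', Rabs z' < eps -> Rabs (U z' 1) < 1/10 /\ U z' 1 = V z' 1 /\
            z' = U z' 1 * (1 - U z' 1)^2 /\ Rabs z' < d).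
  { intros z' Hz'.
    assert (a1 : Rabs z' < d) by (eapply Rlt_le_trans; [exact Hz'| apply Rmin_l]).
    assert (a2 : Rabs (z' - 0) < d1).
    { rewrite Rminus_0_r. eapply Rlt_le_trans; [exact Hz'|]. unfold eps.
      eapply Rle_trans; [apply Rmin_r| apply Rmin_l]. }
    assert (a3 : Rabs (z' - 0) < d2).
    { rewrite Rminus_0_r. eapply Rlt_le_trans; [exact Hz'|]. unfold eps.
      eapply Rle_trans; [apply Rmin_r| apply Rmin_r]. }
    specialize (LU z' a2). specialize (LV z' a3).
    apply (proj1 (ballR _ _ _)) in LU. apply (proj1 (ballR _ _ _)) in LV.
    rewrite HU0, Rminus_0_r in LU. rewrite HV0, Rminus_0_r in LV.
    destruct (HS z' 1 a1 h1) as (E1&E2&_).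
    assert (Heq : U z' 1 = V z' 1).
    { apply diag_eq; auto. lra. }
    split; [exact LU|]. split; [exact Heq|]. split; [|exact a1].
    rewrite Heq at 2. exact E1. }
  intros z [Hz0 Hz].
  destruct (Hsm z Hz) as (Hw & HUV & Hzw & Hzd).
  remember (U z 1) as w eqn:Hwdef.
  assert (Hw' := Hw). apply Rabs_def2 in Hw'.
  assert (Hw0 : w <> 0).
  { intro E. rewrite E in Hzw. rewrite Hzw in Hz0. rewrite Rmult_0_l, Rabs_R0 in Hz0. lra. }
  assert (Hu1 : u1 V z = / (1 - w)) by (unfold u1; rewrite <- HUV; reflexivity).
  assert (HB : Bf U V z 1 1 = w^2 - 2*w^3) by (rewrite Hwdef; apply Bf_diag; congruence).
  assert (HQ : Qf U V z = w).
  { unfold Qf. rewrite Hu1, HB, <- HUV, Hzw. field. split; intro; [lra| apply Hw0; lra]. }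
  assert (cUz := proj1 (cU z 1 Hzd h1)).
  assert (cUt := proj2 (cU z 1 Hzd h1)).
  assert (cVt := proj2 (cV z 1 Hzd h1)).
  split.
  2: {
    assert (Lz : locally z (fun z' => Rabs z' < eps)).
    { apply (R_loc z (eps - Rabs z)); [lra|]. intros y Hy.
      replace y with ((y - z) + z) by ring. eapply Rle_lt_trans; [apply Rabs_triang|]. lra. }
    assert (dW : is_derive (fun y => U y 1) z (/ Pf w w)).
    { replace (/ Pf w w) with ((fun y => / Pf (U y 1) w) z) by (simpl; rewrite <- Hwdef; reflexivity).
      apply (carath _ (fun y => / Pf (U y 1) w)).
      - generalize Lz. apply filter_imp. intros y Hy. destruct (Hsm y Hy) as (Ha & _ & Hya & _).
        simpl. rewrite <- Hwdef. set (a := U y 1) in *. clearbody a.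
        assert (Pp := P_pos a w Ha Hw).
        assert (K : (a - w) * Pf a w = a*(1-a)^2 - w*(1-w)^2) by (unfold Pf; ring).
        rewrite <- Hya, <- Hzw in K. rewrite <- K. field. unfold Pf; lra.
      - apply cinv. unfold Pf. cont. simpl. rewrite <- Hwdef.
        assert (Pp := P_pos w w Hw Hw). unfold Pf; lra. }
    apply (is_derive_ext_loc (fun y => U y 1 ^ 2 - 2 * U y 1 ^ 3)).
    { generalize Lz. apply filter_imp. intros y Hy. destruct (Hsm y Hy) as (Ha & E & _).
      symmetry. apply Bf_diag; auto. }
    auto_derive. { repeat split; exists (/ Pf w w); exact dW. }
    replace (Derive (fun x : R => U x 1) z) with (/ Pf w w) by (symmetry; apply is_derive_unique; exact dW). rewrite <- Hwdef. rewrite HQ, Hu1. rewrite Hzw. unfold Pf.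
    assert (Pp := P_pos w w Hw Hw). unfold Pf in Pp.
    field. split; [intro; lra| split; [exact Hw0| intro; lra]]. }
  pose proof (proj1 (filterlim_locally _ _) cUt (mkposreal _ he)) as LUt.
  pose proof (proj1 (filterlim_locally _ _) cVt (mkposreal _ he)) as LVt.
  assert (Lx : locally 1 (fun t => Rabs (t-1) < d /\ Rabs (U z t - w) < 1/10 /\ Rabs (V z t - w) < 1/10)).
  { generalize (filter_and _ _ (filter_and _ _ LUt LVt) (locally_ball 1 (mkposreal d Hd))). apply filter_imp.
    intros t [[A B] C]. apply (proj1 (ballR _ _ _)) in A. apply (proj1 (ballR _ _ _)) in B.
    apply (proj1 (ballR _ _ _)) in C. simpl in A, B, C. rewrite <- Hwdef in A. rewrite <- HUV in B. auto. }
  assert (Dpos : forall t, Rabs (U z t - w) < 1/10 -> Rabs (V z t - w) < 1/10 -> 0 < Dt U V z w t).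
  { intros t A B. unfold Dt. apply Rabs_def2 in A. apply Rabs_def2 in B. apply D_pos; apply Rabs_def1; lra. }
  assert (D1p : 0 < Dt U V z w 1).
  { apply Dpos; [rewrite <- Hwdef | rewrite <- HUV]; rewrite Rminus_diag_eq, Rabs_R0; auto; lra. }
  assert (dU : is_derive (fun t => U z t) 1 (gUf U V z w 1)).
  { apply (carath _ (gUf U V z w)).
    - generalize Lx. apply filter_imp. intros t (Ht & A & B).
      destruct (HS z t Hzd Ht) as (E1 & E2 & _).
      assert (Dp := Dpos t A B).
      assert (K : (U z t - w) * Dt U V z w t - (t-1)*(z*w*(2 - V z t - w)) =
         (1 - U z t)^2 * (U z t*(1-V z t)^2 - z) + w*(2 - V z t - w) * (V z t*(1-U z t)^2 - t*z)).
      { unfold Dt. generalize (U z t) (V z t). intros a b. rewrite Hzw. ring. }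
      replace (U z t*(1-V z t)^2 - z) with 0 in K by (rewrite <- E1; ring).
      replace (V z t*(1-U z t)^2 - t*z) with 0 in K by (rewrite <- E2; ring).
      rewrite !Rmult_0_r, Rplus_0_r in K. apply Rminus_diag_uniq in K.
      simpl. rewrite <- Hwdef. unfold gUf.
      apply (Rmult_eq_reg_r (Dt U V z w t)); [|lra]. rewrite K. field. lra.
    - unfold gUf. apply cmult. cont. apply cinv. unfold Dt; cont. lra. }
  assert (dV : is_derive (fun t => V z t) 1 (gVf U V z w 1)).
  { apply (carath _ (gVf U V z w)).
    - generalize Lx. apply filter_imp. intros t (Ht & A & B).
      destruct (HS z t Hzd Ht) as (E1 & E2 & _).
      assert (Dp := Dpos t A B).
      assert (K : (V z t - w) * Dt U V z w t - (t-1)*(z*(1 - V z t)^2) =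
         (1 - V z t)^2 * (V z t*(1-U z t)^2 - t*z) + w*(2 - U z t - w) * (U z t*(1-V z t)^2 - z)).
      { unfold Dt. generalize (U z t) (V z t). intros a b. rewrite Hzw. ring. }
      replace (U z t*(1-V z t)^2 - z) with 0 in K by (rewrite <- E1; ring).
      replace (V z t*(1-U z t)^2 - t*z) with 0 in K by (rewrite <- E2; ring).
      rewrite !Rmult_0_r, Rplus_0_r in K. apply Rminus_diag_uniq in K.
      simpl. rewrite <- HUV. unfold gVf.
      apply (Rmult_eq_reg_r (Dt U V z w t)); [|lra]. rewrite K. field. lra.
    - unfold gVf. apply cmult. cont. apply cinv. unfold Dt; cont. lra. }
  assert (Hs0 : 0 < 1 - w - w^2) by nra.
  unfold Bf. auto_derive.
  { repeat split; first [exists (gUf U V z w 1); exact dU | exists (gVf U V z w 1); exact dV | idtac].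
    rewrite <- Hwdef, <- HUV. nra. }
  replace (Derive (fun x : R => U z x) 1) with (gUf U V z w 1) by (symmetry; apply is_derive_unique; exact dU).
  replace (Derive (fun x : R => V z x) 1) with (gVf U V z w 1) by (symmetry; apply is_derive_unique; exact dV).
  rewrite <- Hwdef, <- HUV.
  match goal with |- context [sqrt ?e] => rewrite (sq w e); [|ring|exact Hw] end.
  rewrite HQ, Hu1. unfold gUf, gVf, Dt. rewrite <- Hwdef, <- HUV. rewrite Hzw.
  field. split; [intro; lra| split; [intro; lra| ]].
  unfold Dt in D1p. rewrite <- Hwdef, <- HUV in D1p.
  replace (((1 - w) * (1 - w)) ^ 2 - w ^ 2 * (2 - w - w) * (2 - w - w))
    with ((1 - w) ^ 2 * (1 - w) ^ 2 - w ^ 2 * (2 - w - w) * (2 - w - w)) by ring.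
  lra.
Qed.
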